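(* Let $p,q$ be coprime positive integers with $p\le q$, let $m$ be a positive integer, let $H_{q-p}\subset\mathbb C^5$ be the hypersurface $X_0^{q-p}=X_1X_4-X_2X_3$ with the action of $G=G_0\times G_m$ described in the context, and let $\pi:H_{q-p}\to H_{q-p}/\!\!/G$ be the quotient morphism. Then the Hilbert function $h$ of the general fibers of $\pi$ coincides with that of the regular representation $\mathbb C[G_0\times G_m]$, i.e. $h(n,d)=1$ for all $(n,d)\in\mathbb Z\times\mathbb Z/m\mathbb Z$.
   Context: $G_0\cong\mathbb C^*$ acts on $\mathbb C^5$ by $t\cdot(x_0,\dots,x_4)=(tx_0,t^{-p}x_1,t^{-p}x_2,t^{q}x_3,t^{q}x_4)$ and $G_m\cong\mu_m$ by $\zeta\cdot(x_0,\dots,x_4)=(x_0,\zeta^{-1}x_1,\zeta^{-1}x_2,\zeta x_3,\zeta x_4)$. The irreducible representations of $G$ are identified with $\mathbb Z\times\mathbb Z/m\mathbb Z$; for a $G$-module $V$ write $V_{(n,d)}$ for the multiplicity space $\operatorname{Hom}^G(M_{(n,d)},V)$ of the irreducible representation of weight $(n,d)$. By generic flatness, $\pi$ is flat over a nonempty open subset $Y_0$ of $H_{q-p}/\!\!/G$, and all scheme-theoretic fibers $\pi^{-1}(y)$, $y\in Y_0$, have the same Hilbert function $(n,d)\mapsto\dim\mathbb C[\pi^{-1}(y)]_{(n,d)}$; this is the Hilbert function of the general fibers. *)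

(* Defs.v *)
From HB Require Import structures.
From mathcomp Require Import all_boot all_order all_algebra.
From mathcomp Require Import mpoly.
Set Implicit Arguments. Unset Strict Implicit. Unset Printing Implicit Defensive.
Import Order.TTheory GRing.Theory Num.Theory.
Local Open Scope ring_scope.

Section Defs.
Variable K : numClosedFieldType. (* algebraically closed field of char 0, e.g. C *)
Variables (p q m : nat).

Notation Poly := {mpoly K[5]}.

(* Scalar by which (t, zeta) in G_0 x G_m multiplies the coordinate x_i:
   t.(x0,...,x4) = (t x0, t^-p x1, t^-p x2, t^q x3, t^q x4),
   zeta.(x0,...,x4) = (x0, zeta^-1 x1, zeta^-1 x2, zeta x3, zeta x4). *)
Definition wcoord (t z : K) (i : 'I_5) : K :=
  if (val i == 0)%N then t
  else if (val i <= 2)%N then t ^- p * z^-1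
  else t ^+ q * z.

Definition gact (t z : K) (g : Poly) : Poly :=
  g \mPo [tuple wcoord t z i *: 'X_i | i < 5].

Definition is_weight (n : int) (d : 'I_m) (g : Poly) : Prop :=
  forall t z : K, t != 0 -> z ^+ m = 1 -> gact t z g = (t ^ n * z ^+ d) *: g.

Definition G_invariant (g : Poly) : Prop :=
  forall t z : K, t != 0 -> z ^+ m = 1 -> gact t z g = g.

Definition Hpoly : Poly :=
  'X_(0 : 'I_5) ^+ (q - p) - ('X_(1 : 'I_5) * 'X_(4 : 'I_5)
                               - 'X_(2 : 'I_5) * 'X_(3 : 'I_5)).

Definition onH (x : 'I_5 -> K) : Prop := Hpoly.@[x] = 0.

Definition in_ideal (S : Poly -> Prop) (g : Poly) : Prop :=
  exists s : seq (Poly * Poly),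
    (forall c, c \in s -> S c.2) /\ g = \sum_(c <- s) c.1 * c.2.

(* Generators of the ideal defining the scheme-theoretic fiber pi^-1(pi(x))
   inside C^5: the equation of H, and g - g(x) for all invariants g
   (these generate m_{pi(x)} C[H]). *)
Definition fiber_gen (x : 'I_5 -> K) (g : Poly) : Prop :=
  g = Hpoly \/ exists h, G_invariant h /\ g = h - (h.@[x])%:MP.

(* dim C[pi^-1(pi(x))]_(n,d) = 1 : the (n,d)-isotypic component of the fiber
   ring C[X]/I_x (which is the image of the weight space C[X]_(n,d)) is
   one-dimensional. *)
Definition fiber_hilb_one (x : 'I_5 -> K) (n : int) (d : 'I_m) : Prop :=
  exists v : Poly, is_weight n d v /\ ~ in_ideal (fiber_gen x) v /\
    forall w : Poly, is_weight n d w ->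
      exists c : K, in_ideal (fiber_gen x) (w - c *: v).

End Defs.
Arguments fiber_hilb_one [K] p q m x n d.

(* Main.v *)
Require Import Defs.
From HB Require Import structures.
From mathcomp Require Import all_boot all_order all_algebra.
From mathcomp Require Import mpoly.
From mathcomp Require Import ring zify.
Import Order.TTheory GRing.Theory Num.Theory.
Local Open Scope ring_scope.

Section S.
Variable K : numClosedFieldType.
Variables (p q m : nat).

Definition mono (a b : nat) : {mpoly K[5]} := 'X_(0 : 'I_5) ^+ a * 'X_(1 : 'I_5) ^+ b.

Lemma gact_mono t z a b :
  gact p q t z (mono a b) = (t ^+ a * (t ^- p * z^-1) ^+ b) *: mono a b.
Proof.
rewrite /gact /mono rmorphM !rmorphXn /= !comp_mpolyXU.
rewrite -!tnth_nth !tnth_mktuple /wcoord /=.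
by rewrite !exprZn -scalerAl -scalerAr scalerA.
Qed.

Lemma char_t (t z : K) (a b : nat) (n : int) :
  t != 0 -> a%:Z = n + (p * b)%N%:Z ->
  t ^+ a * (t ^- p * z^-1) ^+ b = t ^ n * z^-1 ^+ b.
Proof.
move=> t0 H.
have -> : n = a%:Z - (p * b)%N%:Z by rewrite H addrK.
rewrite expfzDr // -invr_expz exprMn -exprVn -exprM.
rewrite mulrA [t^-1 ^+ _]exprVn. reflexivity. Qed.

Lemma z_ne0 (z : K) : (0 < m)%N -> z ^+ m = 1 -> z != 0.
Proof.
move=> m0 zm; apply/eqP => z0; move: zm; rewrite z0 expr0n.
by case: m m0 => // m' _ /eqP; rewrite eq_sym oner_eq0.
Qed.

Lemma z_dvd (z : K) (e b : nat) : (0 < m)%N -> z ^+ m = 1 -> (m %| e + b)%N ->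
  z ^+ e * z ^+ b = 1.
Proof.
move=> m0 zm /dvdnP [k Hk].
by rewrite -exprD Hk mulnC exprM zm expr1n.
Qed.

Lemma mono_ex (n : int) (e : nat) : (0 < p)%N -> (0 < m)%N ->
  exists a b : nat, a%:Z = n + (p * b)%N%:Z /\ (m %| e + b)%N.
Proof.
move=> p0 m0.
set b := (e * (m - 1) + m * `|n|)%N.
have hb : (`|n| <= p * b)%N.
  rewrite /b; have : (1 <= p * m)%N by rewrite muln_gt0 p0 m0.
  nia.
exists (absz (n + (p * b)%N%:Z)), b; split.
  apply: gez0_abs; lia.
apply/dvdnP; exists (e + `|n|)%N; rewrite /b; nia.
Qed.

Lemma fiber_lemma (x : 'I_5 -> K) (n : int) (d : 'I_m) (v v' : {mpoly K[5]}) :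
  (0 < m)%N -> onH p q x ->
  is_weight p q n d v ->
  (forall t z, t != 0 -> z ^+ m = 1 -> gact p q t z v' = (t ^ n * z ^+ d)^-1 *: v') ->
  v.@[x] != 0 -> v'.@[x] != 0 ->
  fiber_hilb_one p q m x n d.
Proof.
move=> m0 Hx Hv Hv' vx v'x.
have inv : forall w, is_weight p q n d w -> G_invariant p q m (w * v').
  move=> w Hw t z t0 zm.
  have gM : gact p q t z (w * v') = gact p q t z w * gact p q t z v' by rewrite /gact rmorphM.
  rewrite gM Hw // Hv' //.
  rewrite -scalerAl -scalerAr scalerA mulfV ?scale1r //.
  have z0 := @z_ne0 z m0 zm; by rewrite mulf_neq0 ?expfz_neq0 ?expf_neq0.
exists v; split => //; split.
  move=> [s [Hs Hsum]]; move: vx; rewrite Hsum raddf_sum /=.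
  rewrite big1_seq ?eqxx // => c /andP [_ cs].
  rewrite mevalM; case: (Hs c cs) => [->|[h [_ ->]]].
    by move: Hx; rewrite /onH => ->; rewrite mulr0.
  by rewrite mevalB mevalC subrr mulr0.
move=> w Hw.
set A := (v * v').@[x]; set B := (w * v').@[x].
have A0 : A != 0 by rewrite /A mevalM mulf_neq0.
exists (B / A).
exists [:: ((- A^-1) *: w, v * v' - A%:MP); (A^-1 *: v, w * v' - B%:MP)].
split.
  move=> c; rewrite !inE => /orP [/eqP -> | /eqP ->]; right.
    by exists (v * v'); split => //; apply: inv.
  by exists (w * v'); split => //; apply: inv.
rewrite !big_cons big_nil addr0 /=.
rewrite -!mul_mpolyC.
have HA : (A^-1)%:MP * A%:MP = 1 :> {mpoly K[5]} by rewrite -rmorphM mulVf.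
rewrite mpolyCN rmorphM /=.
transitivity (w * ((A^-1)%:MP * A%:MP) - B%:MP * (A^-1)%:MP * v); last by ring.
by rewrite HA mulr1.
Qed.

End S.

Lemma meval_mono (K : numClosedFieldType) (x : 'I_5 -> K) a b :
  (mono K a b).@[x] = x 0 ^+ a * x 1 ^+ b.
Proof. by rewrite /mono mevalM !rmorphXn /= !mevalXU. Qed.

Lemma zinv_eq (K : numClosedFieldType) (z u w : K) : z != 0 -> z * u = 1 -> z * w = 1 -> u = w.
Proof. by move=> z0 H1 H2; apply: (mulfI z0); rewrite H1 H2. Qed.

Theorem corollary3p3 (K : numClosedFieldType) (p q m : nat) :
  (0 < p)%N -> (0 < q)%N -> coprime p q -> (p <= q)%N -> (0 < m)%N ->
  exists h : {mpoly K[5]},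
    G_invariant p q m h /\
    (exists x0 : 'I_5 -> K, onH p q x0 /\ h.@[x0] != 0) /\
    forall x : 'I_5 -> K, onH p q x -> h.@[x] != 0 ->
      forall (n : int) (d : 'I_m), fiber_hilb_one p q m x n d.
Proof.
move=> p0 q0 cop pq m0.
exists (mono K (p * m) m); split; [|split].
- move=> t z t0 zm; rewrite gact_mono (@char_t K p t z (p * m) m 0) ?add0r //.
  by rewrite expr0z mul1r exprVn zm invr1 scale1r.
- exists (fun i : 'I_5 => if (val i == 2)%N || (val i == 3)%N then 0 else 1 : K).
  split; last by rewrite meval_mono /= !expr1n mulr1 oner_neq0.
  rewrite /onH /Hpoly !mevalB !mevalM rmorphXn /= !mevalXU /=.
  by rewrite expr1n !mulr1 mulr0 subr0 subrr.
move=> x Hx hx n d.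
have [x00 x10] : x 0 != 0 /\ x 1 != 0.
  move: hx; rewrite meval_mono mulf_eq0 negb_or => /andP [].
  by rewrite !expf_eq0 !negb_and m0 muln_gt0 p0 m0.
have [a [b [Hab Hd]]] := @mono_ex p m n d p0 m0.
have [a' [b' [Hab' Hd']]] := @mono_ex p m (- n) (d * (m - 1)) p0 m0.
apply: (@fiber_lemma K p q m x n d (mono K a b) (mono K a' b') m0 Hx).
- move=> t z t0 zm; rewrite gact_mono (@char_t K p t z a b n t0 Hab).
  have z0 := @z_ne0 K m z m0 zm.
  have H := @z_dvd K m z d b m0 zm Hd.
  congr (_ *: _); congr (_ * _).
  rewrite exprVn; apply: (@zinv_eq K (z ^+ b)); first by rewrite expf_neq0.
    by rewrite mulfV // expf_neq0.
  by rewrite mulrC.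
- move=> t z t0 zm; rewrite gact_mono (@char_t K p t z a' b' (- n) t0 Hab').
  have z0 := @z_ne0 K m z m0 zm.
  have H := @z_dvd K m z (d * (m - 1)) b' m0 zm Hd'.
  have H2 : z ^+ (d * (m - 1)) * z ^+ d = 1.
    apply: (@z_dvd K m z _ _ m0 zm).
    have -> : (d * (m - 1) + d = m * d)%N by nia.
    exact: dvdn_mulr.
  congr (_ *: _); rewrite invfM -invr_expz exprVn; congr (_ * _).
  congr (_^-1); apply: (@zinv_eq K (z ^+ (d * (m - 1)))) => //.
  by rewrite expf_neq0.
- by rewrite meval_mono mulf_neq0 // expf_neq0.
- by rewrite meval_mono mulf_neq0 // expf_neq0.
Qed.
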